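(* If the sequent $\vdash A$ (with empty context) has a derivation in LJB, then $\vdash A$ also has a derivation in LJ$^{+}$.
   Context: Minimal predicate logic: terms $t ::= x \mid f(t_1,\dots,t_n)$, formulas $A ::= P(t_1,\dots,t_n)\mid A\rightarrow A\mid \forall x\,A$. Positivity: atomic formulas are positive and negative; $A\rightarrow B$ is positive (resp. negative) if $A$ is negative (resp. positive) and $B$ positive (resp. negative); $\forall x\,A$ is positive if $A$ is positive, never negative. A sequent is positive if its context formulas are negative and its right-hand side positive; both calculi below are for positive sequents. LJ$^{+}$: sequents $\Gamma\vdash A$ with $\Gamma$ a finite multiset of formulas, formulas modulo $\alpha$-equivalence; rules (L$\rightarrow$) from $\Gamma, A_1\rightarrow\dots\rightarrow A_n\rightarrow P\vdash A_i$ ($i=1..n$, $n\ge0$) infer $\Gamma, A_1\rightarrow\dots\rightarrow A_n\rightarrow P\vdash P$, $P$ atomic; (R$\forall$) from $\Gamma\vdash A$ infer $\Gamma\vdash\forall x\,A$ if $x$ not free in $\Gamma$; (R$\rightarrow$) from $\Gamma,A\vdash B$ infer $\Gamma\vdash A\rightarrow B$. LJB: an LJB-context is a finite multiset of items; an item is a formula or $[\Gamma]_V$ ($V$ a finite set of variables bound by the bracket, $\Gamma$ an LJB-context); $FV([\Gamma]_V)=FV(\Gamma)\setminus V$. Cleaning rules (anywhere in a context, contexts being multisets): $[I,\Gamma]_V\longrightarrow I,[\Gamma]_V$ if $FV(I)\cap V=\emptyset$; $[\ ]_V\longrightarrow\emptyset$; $I\,I\longrightarrow I$. This system terminates; $\Gamma{\downarrow}$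 denotes the normal form of $\Gamma$ obtained with a fixed arbitrary strategy. LJB rules apply only to LJB-sequents $\Gamma\vdash A$ with $\Gamma$ in normal form and in which, in each formula, bound variables are pairwise distinct and distinct from free variables; formulas are not identified modulo $\alpha$. Rules: (L$\rightarrow$) from $\Gamma'\vdash A_1,\dots,\Gamma'\vdash A_n$ infer $\Gamma\vdash P$, where $\Gamma=\Gamma_1,[\Gamma_2,[\dots\Gamma_{i-1},[\Gamma_i, A_1\rightarrow\dots\rightarrow A_n\rightarrow P]_{V_{i-1}}\dots]_{V_2}]_{V_1}$ ($i\ge1$), $\Gamma'=([\dots[[\Gamma_1]_{V_1},\Gamma_2]_{V_2},\dots,\Gamma_{i-1}]_{V_{i-1}},\Gamma_i,A_1\rightarrow\dots\rightarrow A_n\rightarrow P){\downarrow}$, $P$ atomic with no free variable in $V_1\cup\dots\cup V_{i-1}$; (R$\forall$) from $[\Gamma]_V{\downarrow}\vdash A$ infer $\Gamma\vdash\forall x\,A$, where $V$ is the set of all variables bound in $\forall x\,A$; (R$\rightarrow$) from $(\Gamma,A){\downarrow}\vdash B$ infer $\Gamma\vdash A\rightarrow B$. *)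

(* Defs.v *)
From Stdlib Require Import List Arith Bool Permutation.
Import ListNotations.

Definition var := nat.

Inductive term : Type :=
| Var (x : var)
| Fn (f : nat) (ts : list term).

Inductive formula : Type :=
| Atom (p : nat) (ts : list term)
| Imp (A B : formula)
| All (x : var) (A : formula).

Fixpoint fvt (t : term) : list var :=
  match t with
  | Var x => [x]
  | Fn _ ts => (fix go (l : list term) : list var :=
                  match l with [] => [] | t :: l => fvt t ++ go l end) ts
  end.

Fixpoint fvf (A : formula) : list var :=
  match A with
  | Atom _ ts => flat_map fvt ts
  | Imp A B => fvf A ++ fvf B
  | All x A => remove Nat.eq_dec x (fvf A)
  end.

Fixpoint bv (A : formula) : list var :=
  match A with
  | Atom _ _ => []
  | Imp A B => bv A ++ bv B
  | All x A => x :: bv A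
  end.

Definition well_named (A : formula) : Prop :=
  NoDup (bv A) /\ (forall x, In x (bv A) -> ~ In x (fvf A)).

Fixpoint pos (A : formula) : bool :=
  match A with
  | Atom _ _ => true
  | Imp A B => neg A && pos B
  | All _ A => pos A
  end
with neg (A : formula) : bool :=
  match A with
  | Atom _ _ => true
  | Imp A B => pos A && neg B
  | All _ _ => false
  end.

Fixpoint imps (As : list formula) (C : formula) : formula :=
  match As with
  | [] => C
  | A :: As => Imp A (imps As C)
  end.

Inductive dterm : Type :=
| DB (n : nat)
| DFr (x : var)
| DFn (f : nat) (ts : list dterm).

Inductive dform : Type :=
| DAtom (p : nat) (ts : list dterm)
| DImp (A B : dform)
| DAll (A : dform).

Fixpoint lookup (x : var) (env : list var) : option nat :=
  match env with
  | [] => None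
  | y :: e => if Nat.eqb x y then Some 0 else option_map S (lookup x e)
  end.

Fixpoint dbt (env : list var) (t : term) : dterm :=
  match t with
  | Var x => match lookup x env with Some n => DB n | None => DFr x end
  | Fn f ts => DFn f ((fix go (l : list term) : list dterm :=
                         match l with [] => [] | t :: l => dbt env t :: go l end) ts)
  end.

Fixpoint dbf (env : list var) (A : formula) : dform :=
  match A with
  | Atom p ts => DAtom p (map (dbt env) ts)
  | Imp A B => DImp (dbf env A) (dbf env B)
  | All x A => DAll (dbf (x :: env) A)
  end.

Definition alpha (A B : formula) : Prop := dbf [] A = dbf [] B.

Definition positive_seq (G : list formula) (A : formula) : Prop :=
  (forall B, In B G -> neg B = true) /\ pos A = true.

(* Contexts are lists read as multisets (all rules are permutation-invariant);
   formulas are taken modulo alpha via the rule LJp_alpha. *)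
Inductive LJp : list formula -> formula -> Prop :=
| LJp_L (G : list formula) (As : list formula) (p : nat) (ts : list term) :
    positive_seq G (Atom p ts) ->
    In (imps As (Atom p ts)) G ->
    (forall A, In A As -> LJp G A) ->
    LJp G (Atom p ts)
| LJp_Rall (G : list formula) (x : var) (A : formula) :
    positive_seq G (All x A) ->
    (forall B, In B G -> ~ In x (fvf B)) ->
    LJp G A ->
    LJp G (All x A)
| LJp_Rimp (G : list formula) (A B : formula) :
    positive_seq G (Imp A B) ->
    LJp (A :: G) B ->
    LJp G (Imp A B)
| LJp_alpha (G G' : list formula) (A A' : formula) :
    Forall2 alpha G G' -> alpha A A' -> LJp G' A' -> LJp G A.

Inductive item : Type :=
| IFm (A : formula)
| IB (V : list var) (D : list item).   (* [D]_V, V read as a finite set *)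

Definition ctx := list item.

(* equality of items: multisets inside brackets, sets for V *)
Inductive item_equiv : item -> item -> Prop :=
| ieF (A : formula) : item_equiv (IFm A) (IFm A)
| ieB (V V' : list var) (D D0 D' : list item) :
    (forall x, In x V <-> In x V') ->
    Permutation D D0 -> Forall2 item_equiv D0 D' ->
    item_equiv (IB V D) (IB V' D').

Definition ctx_equiv (G G' : ctx) : Prop :=
  exists G0, Permutation G G0 /\ Forall2 item_equiv G0 G'.

Fixpoint fvi (J : item) : list var :=
  match J with
  | IFm A => fvf A
  | IB V D => filter (fun x => negb (existsb (Nat.eqb x) V))
                ((fix go (l : list item) : list var :=
                    match l with [] => [] | J :: l => fvi J ++ go l end) D)
  end.

Fixpoint formsi (J : item) : list formula :=
  match J with
  | IFm A => [A]
  | IB _ D => (fix go (l : list item) : list formula :=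
                 match l with [] => [] | J :: l => formsi J ++ go l end) D
  end.

Definition formsc (G : ctx) : list formula := flat_map formsi G.

Inductive clean_step : ctx -> ctx -> Prop :=
| cs_out (G G' : ctx) (V : list var) (J : item) (D R : ctx) :
    ctx_equiv G (IB V (J :: D) :: R) ->
    (forall x, In x (fvi J) -> ~ In x V) ->
    ctx_equiv G' (J :: IB V D :: R) ->
    clean_step G G'
| cs_empty (G G' : ctx) (V : list var) (R : ctx) :
    ctx_equiv G (IB V [] :: R) -> ctx_equiv G' R -> clean_step G G'
| cs_dup (G G' : ctx) (J : item) (R : ctx) :
    ctx_equiv G (J :: J :: R) -> ctx_equiv G' (J :: R) -> clean_step G G'
| cs_in (G G' : ctx) (V : list var) (D D' R : ctx) :
    ctx_equiv G (IB V D :: R) -> clean_step D D' ->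
    ctx_equiv G' (IB V D' :: R) -> clean_step G G'.

Inductive clean_star : ctx -> ctx -> Prop :=
| cst_refl (G G' : ctx) : ctx_equiv G G' -> clean_star G G'
| cst_step (G G1 G2 : ctx) : clean_step G G1 -> clean_star G1 G2 -> clean_star G G2.

Definition normal (G : ctx) : Prop := forall G', ~ clean_step G G'.

(* nf is "normal form computed by a fixed arbitrary strategy": a function on
   multisets of items returning a normal form reachable by cleaning. *)
Definition clean_strategy (nf : ctx -> ctx) : Prop :=
  (forall G, clean_star G (nf G) /\ normal (nf G)) /\
  (forall G G', ctx_equiv G G' -> ctx_equiv (nf G) (nf G')).

Definition ljb_sequent (G : ctx) (A : formula) : Prop :=
  normal G /\
  (forall B, In B (formsc G) -> well_named B /\ neg B = true) /\
  well_named A /\ pos A = true.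

(* path = [(G1,V1); ...; (G_{i-1},V_{i-1})] *)
Fixpoint plug (path : list (ctx * list var)) (inner : ctx) : ctx :=
  match path with
  | [] => inner
  | (G, V) :: r => G ++ [IB V (plug r inner)]
  end.

(* unwind acc path: acc := [acc, G_k]_{V_k} successively;
   unwind [] path = [ ... [[G1]_{V1}, G2]_{V2}, ..., G_{i-1}]_{V_{i-1}} *)
Fixpoint unwind (acc : ctx) (path : list (ctx * list var)) : ctx :=
  match path with
  | [] => acc
  | (G, V) :: r => unwind [IB V (acc ++ G)] r
  end.

Inductive LJB (nf : ctx -> ctx) : ctx -> formula -> Prop :=
| LJB_L (G : ctx) (path : list (ctx * list var)) (Gi : ctx)
        (As : list formula) (p : nat) (ts : list term) :
    ljb_sequent G (Atom p ts) ->
    ctx_equiv G (plug path (Gi ++ [IFm (imps As (Atom p ts))])) ->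
    (forall x, In x (flat_map fvt ts) -> ~ In x (flat_map snd path)) ->
    (forall A, In A As ->
       LJB nf (nf (unwind [] path ++ Gi ++ [IFm (imps As (Atom p ts))])) A) ->
    LJB nf G (Atom p ts)
| LJB_Rall (G : ctx) (x : var) (A : formula) :
    ljb_sequent G (All x A) ->
    LJB nf (nf [IB (bv (All x A)) G]) A ->
    LJB nf G (All x A)
| LJB_Rimp (G : ctx) (A B : formula) :
    ljb_sequent G (Imp A B) ->
    LJB nf (nf (G ++ [IFm A])) B ->
    LJB nf G (Imp A B).

(* Main.v *)
Require Import Defs.
From Stdlib Require Import List Arith Bool Permutation Lia.
Import ListNotations.

Fixpoint term_ind' (P : term -> Prop) (HV : forall x, P (Var x))
  (HF : forall f ts, Forall P ts -> P (Fn f ts)) (t : term) : P t :=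
  match t with
  | Var x => HV x
  | Fn f ts => HF f ts ((fix go (l : list term) : Forall P l :=
       match l with [] => Forall_nil _ | u :: l => Forall_cons _ (term_ind' P HV HF u) (go l) end) ts)
  end.

Fixpoint dterm_ind' (P : dterm -> Prop) (HB : forall n, P (DB n)) (HV : forall x, P (DFr x))
  (HF : forall f ts, Forall P ts -> P (DFn f ts)) (t : dterm) : P t :=
  match t with
  | DB n => HB n
  | DFr x => HV x
  | DFn f ts => HF f ts ((fix go (l : list dterm) : Forall P l :=
       match l with [] => Forall_nil _ | u :: l => Forall_cons _ (dterm_ind' P HB HV HF u) (go l) end) ts)
  end.

Lemma fvt_Fn f ts : fvt (Fn f ts) = flat_map fvt ts.
Proof. simpl. try (induction ts; simpl; congruence). Qed.

Lemma dbt_Fn env f ts : dbt env (Fn f ts) = DFn f (map (dbt env) ts).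
Proof. simpl. try (f_equal; induction ts; simpl; congruence). Qed.

Fixpoint rnt (r : var -> var) (t : dterm) : dterm :=
  match t with DB n => DB n | DFr x => DFr (r x) | DFn f ts => DFn f (map (rnt r) ts) end.
Fixpoint rnf (r : var -> var) (d : dform) : dform :=
  match d with
  | DAtom p ts => DAtom p (map (rnt r) ts)
  | DImp a b => DImp (rnf r a) (rnf r b)
  | DAll a => DAll (rnf r a)
  end.
Fixpoint abst (z : var) (k : nat) (t : dterm) : dterm :=
  match t with DB n => DB n | DFr x => if Nat.eqb x z then DB k else DFr x
  | DFn f ts => DFn f (map (abst z k) ts) end.
Fixpoint absf (z : var) (k : nat) (d : dform) : dform :=
  match d with
  | DAtom p ts => DAtom p (map (abst z k) ts)
  | DImp a b => DImp (absf z k a) (absf z k b)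
  | DAll a => DAll (absf z (S k) a)
  end.
Fixpoint dfvt (t : dterm) : list var :=
  match t with DB _ => [] | DFr x => [x] | DFn _ ts => flat_map dfvt ts end.
Fixpoint dfvf (d : dform) : list var :=
  match d with
  | DAtom _ ts => flat_map dfvt ts
  | DImp a b => dfvf a ++ dfvf b
  | DAll a => dfvf a
  end.
Fixpoint dpos (d : dform) : bool :=
  match d with DAtom _ _ => true | DImp a b => dneg a && dpos b | DAll a => dpos a end
with dneg (d : dform) : bool :=
  match d with DAtom _ _ => true | DImp a b => dpos a && dneg b | DAll _ => false end.

Definition upd (r : var -> var) (x z : var) : var -> var :=
  fun y => if Nat.eqb y x then z else r y.

Lemma posneg_dbf : forall A env, pos A = dpos (dbf env A) /\ neg A = dneg (dbf env A).
Proof.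
  induction A; intros env; simpl; auto.
  destruct (IHA1 env), (IHA2 env). rewrite H, H0, H1, H2. auto.
  destruct (IHA (x :: env)). rewrite H. auto.
Qed.

Lemma posneg_rnf : forall d r, dpos (rnf r d) = dpos d /\ dneg (rnf r d) = dneg d.
Proof.
  induction d; intros r; simpl; auto.
  destruct (IHd1 r), (IHd2 r). rewrite H, H0, H1, H2. auto.
  destruct (IHd r). rewrite H. auto.
Qed.

Lemma lookup_app1 y env z : lookup y (env ++ [z]) =
  match lookup y env with Some n => Some n | None => if Nat.eqb y z then Some (length env) else None end.
Proof.
  induction env; simpl.
  - destruct (Nat.eqb y z); auto.
  - destruct (Nat.eqb y a); auto. rewrite IHenv.
    destruct (lookup y env); simpl; auto. destruct (Nat.eqb y z); auto.
Qed.

Lemma dbt_abs : forall t env z, dbt (env ++ [z]) t = abst z (length env) (dbt env t).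
Proof.
  induction t using term_ind'; intros env z.
  - simpl. rewrite lookup_app1. destruct (lookup x env); simpl; auto.
    destruct (Nat.eqb x z); auto.
  - rewrite !dbt_Fn. simpl. f_equal. rewrite map_map. apply map_ext_in.
    intros a Ha. rewrite Forall_forall in H. apply H; auto.
Qed.

Lemma dbf_abs : forall A env z, dbf (env ++ [z]) A = absf z (length env) (dbf env A).
Proof.
  induction A; intros env z; simpl.
  - f_equal. rewrite map_map. apply map_ext. intros; apply dbt_abs.
  - rewrite IHA1, IHA2. auto.
  - f_equal. apply (IHA (x :: env)).
Qed.

Lemma dfvt_dbt : forall t env y, In y (dfvt (dbt env t)) -> In y (fvt t) /\ lookup y env = None.
Proof.
  induction t using term_ind'; intros env y Hy.
  - simpl in Hy. destruct (lookup x env) eqn:E; simpl in Hy; [contradiction|].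
    destruct Hy as [<-|[]]. simpl; auto.
  - rewrite dbt_Fn in Hy. simpl in Hy. rewrite fvt_Fn.
    apply in_flat_map in Hy as [u [Hu Hy]]. apply in_map_iff in Hu as [t [<- Ht]].
    rewrite Forall_forall in H. destruct (H t Ht env y Hy). split; auto.
    apply in_flat_map. eauto.
Qed.

Lemma dfvf_dbf : forall A env y, In y (dfvf (dbf env A)) -> In y (fvf A) /\ lookup y env = None.
Proof.
  induction A; intros env y Hy; simpl in *.
  - apply in_flat_map in Hy as [u [Hu Hy]]. apply in_map_iff in Hu as [t [<- Ht]].
    destruct (dfvt_dbt t env y Hy). split; auto. apply in_flat_map; eauto.
  - apply in_app_or in Hy as [Hy|Hy].
    + destruct (IHA1 env y Hy). split; auto. apply in_or_app; auto.
    + destruct (IHA2 env y Hy). split; auto. apply in_or_app; auto.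
  - destruct (IHA (x :: env) y Hy) as [H1 H2]. simpl in H2.
    destruct (Nat.eqb y x) eqn:E; [discriminate|].
    apply Nat.eqb_neq in E. split.
    + apply in_in_remove; auto.
    + destruct (lookup y env); auto. discriminate.
Qed.

Lemma rnt_agree : forall t r s, (forall y, In y (dfvt t) -> r y = s y) -> rnt r t = rnt s t.
Proof.
  induction t using dterm_ind'; intros r s Hy; simpl in *; auto.
  - f_equal. apply map_ext_in. intros a Ha. rewrite Forall_forall in H.
    apply H; auto. intros y Hy'. apply Hy. apply in_flat_map; eauto.
Qed.

Lemma rnf_agree : forall d r s, (forall y, In y (dfvf d) -> r y = s y) -> rnf r d = rnf s d.
Proof.
  induction d; intros r s Hy; simpl in *.
  - f_equal. apply map_ext_in. intros a Ha. apply rnt_agree.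
    intros y Hy'. apply Hy. apply in_flat_map; eauto.
  - rewrite (IHd1 r s), (IHd2 r s); auto; intros; apply Hy; apply in_or_app; auto.
  - rewrite (IHd r s); auto.
Qed.

Lemma rnt_id : forall t, rnt (fun y => y) t = t.
Proof.
  induction t using dterm_ind'; simpl; auto. f_equal.
  rewrite Forall_forall in H. rewrite <- (map_id ts) at 2. apply map_ext_in. auto.
Qed.

Lemma rnf_id : forall d, rnf (fun y => y) d = d.
Proof.
  induction d; simpl; try congruence. f_equal.
  rewrite <- (map_id ts) at 2. apply map_ext. apply rnt_id.
Qed.

Lemma abs_rnt : forall t r x z k, (forall y, In y (dfvt t) -> y <> x -> r y <> z) ->
  abst z k (rnt (upd r x z) t) = rnt r (abst x k t).
Proof.
  induction t using dterm_ind'; intros r x0 z k Hy; simpl in *; auto.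
  - unfold upd. destruct (Nat.eqb x x0) eqn:E; simpl.
    + rewrite Nat.eqb_refl. auto.
    + apply Nat.eqb_neq in E. destruct (Nat.eqb (r x) z) eqn:E2; auto.
      apply Nat.eqb_eq in E2. exfalso. apply (Hy x); auto.
  - f_equal. rewrite !map_map. apply map_ext_in. intros a Ha.
    rewrite Forall_forall in H. apply H; auto. intros y Hy' Hne. apply Hy; auto.
    apply in_flat_map; eauto.
Qed.

Lemma abs_rnf : forall d r x z k, (forall y, In y (dfvf d) -> y <> x -> r y <> z) ->
  absf z k (rnf (upd r x z) d) = rnf r (absf x k d).
Proof.
  induction d; intros r x z k Hy; simpl in *.
  - f_equal. rewrite !map_map. apply map_ext_in. intros a Ha. apply abs_rnt.
    intros y Hy'. apply Hy. apply in_flat_map; eauto.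
  - rewrite IHd1, IHd2; auto; intros; apply Hy; auto; apply in_or_app; auto.
  - rewrite IHd; auto.
Qed.

Lemma fresh (L : list nat) : exists z, ~ In z L.
Proof.
  exists (S (list_max L)). intro H.
  assert (H1 : list_max L <= list_max L) by lia.
  apply list_max_le in H1. rewrite Forall_forall in H1. apply H1 in H. lia.
Qed.

Lemma lookup_lt : forall env y n, lookup y env = Some n -> n < length env.
Proof.
  induction env; simpl; intros y n H; [discriminate|].
  destruct (Nat.eqb y a). injection H; intros; subst; lia.
  destruct (lookup y env) eqn:E; simpl in H; [|discriminate].
  injection H; intros; subst. apply IHenv in E. lia.
Qed.

Lemma lookup_none : forall env y, ~ In y env -> lookup y env = None.
Proof.
  induction env; simpl; intros y H; auto.
  destruct (Nat.eqb y a) eqn:E. apply Nat.eqb_eq in E. subst; tauto.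
  rewrite IHenv; auto.
Qed.

Lemma lookup_nth : forall env n d, NoDup env -> n < length env -> lookup (nth n env d) env = Some n.
Proof.
  induction env; simpl; intros n d Hn Hl; [lia|].
  inversion Hn; subst. destruct n.
  - rewrite Nat.eqb_refl. auto.
  - destruct (Nat.eqb (nth n env d) a) eqn:E.
    + apply Nat.eqb_eq in E. exfalso. apply H1. rewrite <- E. apply nth_In. lia.
    + rewrite IHenv; auto. lia.
Qed.

Lemma exists_rn_term : forall t env env' s, length env = length env' -> NoDup env' ->
  (forall w, lookup w env = None -> In w (fvt t) -> ~ In (s w) env') ->
  exists u, dbt env' u = rnt s (dbt env t).
Proof.
  induction t using term_ind'; intros env env' s Hl Hn Hw.
  - simpl. destruct (lookup x env) eqn:E.
    + exists (Var (nth n env' 0)). simpl. rewrite lookup_nth; auto.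
      apply lookup_lt in E. lia.
    + exists (Var (s x)). simpl. rewrite lookup_none; auto. apply Hw; simpl; auto.
  - assert (exists us, map (dbt env') us = map (rnt s) (map (dbt env) ts)).
    { induction ts as [|t ts IH].
      - exists []. auto.
      - inversion H; subst. destruct (H2 env env' s) as [u Hu]; auto.
        { intros w H0 H1. apply Hw; auto. rewrite fvt_Fn. simpl. apply in_or_app; auto. }
        destruct IH as [us Hus]; auto.
        { intros w H0 H1. apply Hw; auto. rewrite fvt_Fn in *. simpl. apply in_or_app; auto. }
        exists (u :: us). simpl. congruence. }
    destruct H0 as [us Hus]. exists (Fn f us). rewrite !dbt_Fn. simpl. congruence.
Qed.

Lemma exists_rn : forall A env env' s, length env = length env' -> NoDup env' ->
  (forall w, lookup w env = None -> In w (fvf A) -> ~ In (s w) env') ->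
  exists B, dbf env' B = rnf s (dbf env A).
Proof.
  induction A; intros env env' s Hl Hn Hw; simpl in *.
  - assert (exists us, map (dbt env') us = map (rnt s) (map (dbt env) ts)).
    { induction ts as [|t ts IH].
      - exists []. auto.
      - destruct (exists_rn_term t env env' s) as [u Hu]; auto.
        { intros w H0 H1. apply Hw; auto. simpl. apply in_or_app; auto. }
        destruct IH as [us Hus]; auto.
        { intros w H0 H1. apply Hw; auto. simpl. apply in_or_app; auto. }
        exists (u :: us). simpl. congruence. }
    destruct H as [us Hus]. exists (Atom p us). simpl. rewrite Hus, map_map. reflexivity.
  - destruct (IHA1 env env' s) as [B1 H1]; auto.
    { intros; apply Hw; auto; apply in_or_app; auto. }
    destruct (IHA2 env env' s) as [B2 H2]; auto.
    { intros; apply Hw; auto; apply in_or_app; auto. }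
    exists (Imp B1 B2). simpl. congruence.
  - destruct (fresh (env' ++ map s (fvf A))) as [y Hy].
    destruct (IHA (x :: env) (y :: env') s) as [B HB]; simpl; auto.
    { constructor; auto. intro; apply Hy; apply in_or_app; auto. }
    { intros w H1 H2 [H3|H3].
      - apply Hy. apply in_or_app; right. rewrite H3. apply in_map; auto.
      - destruct (Nat.eqb w x) eqn:E; [discriminate|]. apply Nat.eqb_neq in E.
        apply (Hw w); auto.
        + destruct (lookup w env); auto; discriminate.
        + apply in_in_remove; auto. }
    exists (All y B). simpl. f_equal. exact HB.
Qed.

Fixpoint item_ind' (P : item -> Prop) (HF : forall A, P (IFm A))
  (HB : forall V D, Forall P D -> P (IB V D)) (J : item) : P J :=
  match J with
  | IFm A => HF A
  | IB V D => HB V D ((fix go (l : list item) : Forall P l :=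
       match l with [] => Forall_nil _ | u :: l => Forall_cons _ (item_ind' P HF HB u) (go l) end) D)
  end.

Fixpoint ie_ind' (P : item -> item -> Prop) (HF : forall A, P (IFm A) (IFm A))
  (HB : forall V V' D D0 D', (forall x, In x V <-> In x V') -> Permutation D D0 ->
        Forall2 P D0 D' -> P (IB V D) (IB V' D'))
  (J J' : item) (H : item_equiv J J') {struct H} : P J J' :=
  match H with
  | ieF A => HF A
  | ieB V V' D D0 D' h1 h2 h3 => HB V V' D D0 D' h1 h2
      ((fix go (l1 l2 : list item) (h : Forall2 item_equiv l1 l2) {struct h} : Forall2 P l1 l2 :=
          match h with
          | Forall2_nil _ => Forall2_nil _
          | Forall2_cons x y hxy hl => Forall2_cons _ _ (ie_ind' P HF HB x y hxy) (go _ _ hl)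
          end) D0 D' h3)
  end.

Fixpoint Ri (r : var -> var) (G : list formula) (J : item) {struct J} : Prop :=
  match J with
  | IFm B => exists C, In C G /\ dbf [] C = rnf r (dbf [] B)
  | IB V D => exists r', (forall y, ~ In y V -> r' y = r y) /\
      (fix go (l : list item) : Prop := match l with [] => True | J :: l => Ri r' G J /\ go l end) D
  end.

Lemma Ri_IB r G V D : Ri r G (IB V D) <-> exists r', (forall y, ~ In y V -> r' y = r y) /\ Forall (Ri r' G) D.
Proof.
  simpl. split; intros [r' [H1 H2]]; exists r'; (split; [exact H1|]); clear H1.
  - induction D; auto. destruct H2. constructor; auto.
  - induction D; auto. inversion H2; subst. split; auto. apply IHD; auto.
Qed.

Lemma fvi_IB V D : fvi (IB V D) = filter (fun x => negb (existsb (Nat.eqb x) V)) (flat_map fvi D).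
Proof. simpl. try (f_equal; induction D; simpl; congruence). Qed.

Lemma in_fvi_IB y V D : In y (fvi (IB V D)) <-> (exists J, In J D /\ In y (fvi J)) /\ ~ In y V.
Proof.
  rewrite fvi_IB, filter_In, in_flat_map. split.
  - intros [H1 H2]. split; auto. intro H. apply negb_true_iff in H2.
    assert (existsb (Nat.eqb y) V = true). { apply existsb_exists. exists y. rewrite Nat.eqb_refl; auto. }
    congruence.
  - intros [H1 H2]. split; auto. apply negb_true_iff.
    destruct (existsb (Nat.eqb y) V) eqn:E; auto. apply existsb_exists in E as [z [Hz Hz']].
    apply Nat.eqb_eq in Hz'. subst; tauto.
Qed.

Lemma Ri_agree : forall J r s G, (forall y, In y (fvi J) -> r y = s y) -> Ri r G J -> Ri s G J.
Proof.
  induction J using item_ind'; intros r s G Hy HR.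
  - destruct HR as [C [HC HE]]. exists C. split; auto. rewrite HE. apply rnf_agree.
    intros y Hy'. apply dfvf_dbf in Hy' as [Hy' _]. apply Hy. exact Hy'.
  - apply Ri_IB in HR as [r' [H1 H2]]. apply Ri_IB.
    exists (fun y => if in_dec Nat.eq_dec y V then r' y else s y). split.
    + intros y Hy'. destruct (in_dec Nat.eq_dec y V); tauto.
    + rewrite Forall_forall in *. intros J HJ. apply (H J HJ r'); auto.
      intros y Hy'. destruct (in_dec Nat.eq_dec y V); auto.
      rewrite H1; auto. apply Hy. apply in_fvi_IB. split; eauto.
Qed.

Lemma Ri_weak : forall J r G G', incl G G' -> Ri r G J -> Ri r G' J.
Proof.
  induction J using item_ind'; intros r G G' Hi HR.
  - destruct HR as [C [HC HE]]. exists C; auto.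
  - apply Ri_IB in HR as [r' [H1 H2]]. apply Ri_IB. exists r'. split; auto.
    rewrite Forall_forall in *. intros J HJ. eapply H; eauto.
Qed.

Lemma Ri_equiv : forall J J', item_equiv J J' -> forall r G, Ri r G J <-> Ri r G J'.
Proof.
  apply (ie_ind' (fun J J' => forall r G, Ri r G J <-> Ri r G J')).
  - tauto.
  - intros V V' D D0 D' HV HP HF r G. rewrite !Ri_IB.
    assert (forall r', Forall (Ri r' G) D0 <-> Forall (Ri r' G) D').
    { intro r'. clear HP. induction HF; [tauto|]. split; intros H'; inversion H'; subst; constructor;
      try apply H; try apply IHHF; auto. }
    split; intros [r' [H1 H2]]; exists r'; split.
    + intros y Hy; apply H1; rewrite HV; auto.
    + apply H. eapply Permutation_Forall; eauto.
    + intros y Hy; apply H1; rewrite <- HV; auto.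
    + apply H in H2. eapply Permutation_Forall; [apply Permutation_sym; eauto|]; auto.
Qed.

Lemma Ri_ctx_equiv G G' r L : ctx_equiv G G' -> (Forall (Ri r L) G <-> Forall (Ri r L) G').
Proof.
  intros [G0 [HP HF]].
  assert (Forall (Ri r L) G0 <-> Forall (Ri r L) G').
  { clear HP. induction HF; [tauto|]. split; intros H'; inversion H'; subst; constructor;
      try apply (Ri_equiv _ _ H); try apply IHHF; auto. }
  split; intros H'.
  - apply H. eapply Permutation_Forall; eauto.
  - apply H in H'. eapply Permutation_Forall; [apply Permutation_sym; eauto|]; auto.
Qed.

Lemma Ri_clean_step : forall G G', clean_step G G' -> forall r L, Forall (Ri r L) G -> Forall (Ri r L) G'.
Proof.
  induction 1; intros r L HG.
  - apply (Ri_ctx_equiv _ _ r L H) in HG. apply (Ri_ctx_equiv _ _ r L H1).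
    inversion HG; subst. apply Ri_IB in H4 as [r' [H3 H4]]. inversion H4; subst.
    assert (Ri r' L (IB V D) -> Ri r L (IB V D)).
    { intros _. apply Ri_IB. eauto. }
    constructor.
    + apply (Ri_agree J r'); auto.
    + constructor; auto. apply Ri_IB. eauto.
  - apply (Ri_ctx_equiv _ _ r L H) in HG. apply (Ri_ctx_equiv _ _ r L H0).
    inversion HG; auto.
  - apply (Ri_ctx_equiv _ _ r L H) in HG. apply (Ri_ctx_equiv _ _ r L H0).
    inversion HG; auto.
  - apply (Ri_ctx_equiv _ _ r L H) in HG. apply (Ri_ctx_equiv _ _ r L H1).
    inversion HG; subst. apply Ri_IB in H4 as [r' [H3 H4]].
    constructor; auto. apply Ri_IB. eauto.
Qed.

Lemma Ri_clean : forall G G', clean_star G G' -> forall r L, Forall (Ri r L) G -> Forall (Ri r L) G'.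
Proof.
  induction 1; intros r L HG.
  - apply (Ri_ctx_equiv _ _ r L H); auto.
  - apply IHclean_star. eapply Ri_clean_step; eauto.
Qed.

Lemma Ri_plug : forall path inner r L acc, Forall (Ri r L) acc -> Forall (Ri r L) (plug path inner) ->
  exists ri, Forall (Ri ri L) inner /\ Forall (Ri ri L) (unwind acc path) /\
    (forall y, ~ In y (flat_map snd path) -> ri y = r y).
Proof.
  induction path as [|[G V] path IH]; simpl; intros inner r L acc Hacc Hp.
  - exists r. auto.
  - apply Forall_app in Hp as [HG HB]. inversion HB; subst. apply Ri_IB in H1 as [r1 [H1 H1']].
    destruct (IH inner r1 L [IB V (acc ++ G)]) as [ri [A1 [A2 A3]]]; auto.
    { constructor; auto. apply Ri_IB. exists r. split.
      - intros y Hy. symmetry. auto.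
      - apply Forall_app; auto. }
    exists ri. split; auto. split; auto. intros y Hy.
    rewrite A3. apply H1. intro; apply Hy; apply in_or_app; auto.
    intro; apply Hy; apply in_or_app; auto.
Qed.

Lemma posneg_rn X A r : dbf [] X = rnf r (dbf [] A) -> pos X = pos A /\ neg X = neg A.
Proof.
  intros H. destruct (posneg_dbf X []) as [H1 H2]. destruct (posneg_dbf A []) as [H3 H4].
  destruct (posneg_rnf (dbf [] A) r) as [H5 H6]. rewrite H1, H2, H3, H4, H, H5, H6. auto.
Qed.

Lemma imps_dbf : forall As Q C s, dbf [] C = rnf s (dbf [] (imps As Q)) ->
  exists Cs Q', C = imps Cs Q' /\ dbf [] Q' = rnf s (dbf [] Q) /\
    Forall2 (fun c a => dbf [] c = rnf s (dbf [] a)) Cs As.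
Proof.
  induction As as [|A As IH]; simpl; intros Q C s H.
  - exists [], C. auto.
  - destruct C; simpl in H; try discriminate. injection H; intros H1 H2.
    destruct (IH Q C2 s H1) as [Cs [Q' [-> [HQ HF]]]].
    exists (C1 :: Cs), Q'. simpl. auto.
Qed.

Lemma Forall2_refl_alpha L : Forall2 alpha L L.
Proof. induction L; constructor; auto. reflexivity. Qed.

Lemma Forall2_in {X Y} (P : X -> Y -> Prop) l1 l2 x : Forall2 P l1 l2 -> In x l1 -> exists y, In y l2 /\ P x y.
Proof.
  induction 1; simpl; [tauto|]. intros [->|Hx].
  - exists y; auto.
  - destruct (IHForall2 Hx) as [z [Hz Hz']]. exists z; auto.
Qed.

Lemma main nf (Hnf : clean_strategy nf) : forall G A, LJB nf G A ->
  forall r L, (forall C, In C L -> neg C = true) -> Forall (Ri r L) G ->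
  forall A0, dbf [] A0 = rnf r (dbf [] A) -> LJp L A0.
Proof.
  destruct Hnf as [Hn _].
  induction 1; intros r L HL HG A0 HA.
  - apply (Ri_ctx_equiv _ _ r L H0) in HG.
    destruct (Ri_plug path _ r L [] (Forall_nil _) HG) as [ri [A1 [A2 A3]]].
    pose proof A1 as A1'. apply Forall_app in A1' as [_ A1']. inversion A1'; subst.
    destruct H6 as [C [HC HCe]].
    destruct (imps_dbf As (Atom p ts) C ri HCe) as [Cs [Q' [-> [HQ HF]]]].
    destruct Q' as [p0 ts0| |]; try (simpl in HQ; discriminate).
    apply LJp_alpha with L (Atom p0 ts0).
    + apply Forall2_refl_alpha.
    + unfold alpha. rewrite HA, HQ. symmetry. apply rnf_agree.
      intros y Hy. apply A3. apply dfvf_dbf in Hy as [Hy _]. apply H1. exact Hy.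
    + apply LJp_L with Cs; auto.
      * split; auto.
      * intros c Hc. destruct (Forall2_in _ _ _ _ HF Hc) as [a [Ha Hca]].
        apply (H3 a Ha ri L HL); auto.
        destruct (Hn (unwind [] path ++ Gi ++ [IFm (imps As (Atom p ts))])) as [Hc' _].
        apply (Ri_clean _ _ Hc'). apply Forall_app; auto.
  - destruct (fresh (flat_map fvf L ++ map r (dfvf (dbf [] A)))) as [z Hz].
    destruct (exists_rn A [] [] (upd r x z)) as [B' HB']; auto.
    { constructor. }
    apply LJp_alpha with L (All z B').
    + apply Forall2_refl_alpha.
    + unfold alpha. rewrite HA. simpl. f_equal.
      pose proof (dbf_abs B' [] z) as E1; pose proof (dbf_abs A [] x) as E2; simpl in E1, E2. rewrite E1, E2. rewrite HB'.
      symmetry. apply abs_rnf. intros y Hy Hne Heq. apply Hz. apply in_or_app; right.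
      rewrite <- Heq. apply in_map; auto.
    + apply LJp_Rall.
      * split; auto. simpl. destruct (posneg_rn _ _ _ HB') as [-> _].
        destruct H as [_ [_ [_ Hp]]]. exact Hp.
      * intros C HC Hin. apply Hz. apply in_or_app; left. apply in_flat_map; eauto.
      * apply (IHLJB (upd r x z) L HL); auto.
        destruct (Hn [IB (bv (All x A)) G]) as [Hc' _].
        apply (Ri_clean _ _ Hc'). constructor; auto. apply Ri_IB. exists r. split; auto.
        intros y Hy. unfold upd. destruct (Nat.eqb y x) eqn:E; auto.
        apply Nat.eqb_eq in E. subst. exfalso. apply Hy. simpl; auto.
  - destruct A0 as [| X Y |]; simpl in HA; try discriminate.
    injection HA; intros HY HX.
    apply LJp_Rimp.
    + split; auto. simpl. destruct (posneg_rn _ _ _ HX) as [_ ->].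
      destruct (posneg_rn _ _ _ HY) as [-> _].
      destruct H as [_ [_ [_ Hp]]]. exact Hp.
    + apply (IHLJB r (X :: L)); auto.
      * intros C [<-|HC]; auto. destruct (posneg_rn _ _ _ HX) as [_ ->].
        destruct H as [_ [_ [_ Hp]]]. simpl in Hp. apply andb_prop in Hp. tauto.
      * destruct (Hn (G ++ [IFm A])) as [Hc' _].
        apply (Ri_clean _ _ Hc'). apply Forall_app. split.
        -- eapply Forall_impl; [|exact HG]. intros J HJ. eapply Ri_weak; [|exact HJ].
           intros a Ha; simpl; auto.
        -- constructor; auto. exists X. simpl; auto.
Qed.

Theorem proposition7 (nf : ctx -> ctx) (Hnf : clean_strategy nf) (A : formula) :
  LJB nf [] A -> LJp [] A.
Proof.
  intros H. apply (main nf Hnf [] A H (fun y => y) []).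
  - intros C [].
  - constructor.
  - rewrite rnf_id. reflexivity.
Qed.
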